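(* Let $\mathbf{u},\mathbf{v}\in\mathbb{R}^n$ be $k$-sparse unit vectors ($k_{\mathbf{u}}=k_{\mathbf{v}}=k$) following power-law decay profiles with rates $\alpha_{\mathbf{u}},\alpha_{\mathbf{v}}\ge0$, and let $\alpha_{\mathbf{u}\mathbf{v}}=\alpha_{\mathbf{u}}+\alpha_{\mathbf{v}}$. Then, asymptotically in $k$, the sample complexity term $\max_{1\le p\le k} p\, s_{\mathbf{u}}(p)s_{\mathbf{v}}(p)$ governing the Bi-SEP sample size requirement $m\gtrsim \max_{1\le p\le k}p\,s_{\mathbf{u}}(p)s_{\mathbf{v}}(p)\log n$ is of order $k^{\tau}$ with $\tau=\max(1,2-\alpha_{\mathbf{u}\mathbf{v}})$, so the requirement becomes $m\gtrsim k^{\tau}\log n$; except in the boundary case $\{\alpha_{\mathbf{u}},\alpha_{\mathbf{v}}\}=\{0,1\}$, where the term is of order $k\log k$, yielding $m\gtrsim k\log k\log n$.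
   Context: A $k$-sparse unit vector $\mathbf{x}\in\mathbb{R}^n$ follows a power-law decay profile with rate $\alpha\ge0$ if its nonzero entries sorted by magnitude satisfy $x_{(i)}^2\propto i^{-\alpha}$ for $i=1,\dots,k$, normalized so that $\|\mathbf{x}\|_2=1$. Here $x_{(i)}$ denotes the $i$-th largest entry in absolute value. Structure function: $s_{\mathbf{u}}(p)=(\sum_{i=1}^p u_{(i)}^2)^{-1}$, $s_{\mathbf{v}}(p)=(\sum_{i=1}^p v_{(i)}^2)^{-1}$. Bi-SEP is a stagewise SCCA algorithm whose guarantee (under the whitened Gaussian spiked model $\boldsymbol{\Sigma}_{xx}=\boldsymbol{\Sigma}_{yy}=\mathbf{I}_n$, $\boldsymbol{\Sigma}_{xy}=\rho\mathbf{u}\mathbf{v}^\top$) holds when $m\ge C\max_{1\le t\le k}(2t)s_{\mathbf{u}}(t)s_{\mathbf{v}}(t)\log n$ in the balanced case. Notation $a\gtrsim b$ means $a\ge Cb$ for an absolute constant $C>0$; $a\asymp b$ means both directions. *)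

(* Defs.v *)
From HB Require Import structures.
From mathcomp Require Import all_boot all_order all_algebra.
From mathcomp Require Import reals exp.
Set Implicit Arguments. Unset Strict Implicit. Unset Printing Implicit Defensive.
Import Order.TTheory GRing.Theory Num.Theory.
Local Open Scope ring_scope.

Section Defs.
Variable R : realType.

(* squared entries of x sorted in nonincreasing order: the i-th item
   (0-based) is x_(i+1)^2 in the paper's notation *)
Definition sorted_sq (n : nat) (x : 'I_n -> R) : seq R :=
  sort (fun a b : R => b <= a) [seq x i ^+ 2 | i <- enum 'I_n].

Definition struct_fun (n : nat) (x : 'I_n -> R) (p : nat) : R :=
  (\sum_(a <- take p (sorted_sq x)) a)^-1.

Definition power_law_profile (n k : nat) (alpha : R) (x : 'I_n -> R) : Prop :=
  [/\ #|[set i | x i != 0]| = k,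
      \sum_i x i ^+ 2 = 1 &
      exists c : R, 0 < c /\
        forall i : nat, (i < k)%N ->
          nth 0 (sorted_sq x) i = c * (i.+1%:R `^ (- alpha))].

Definition bisep_term (n k : nat) (u v : 'I_n -> R) : R :=
  \big[Num.max/0]_(1 <= p < k.+1) (p%:R * struct_fun u p * struct_fun v p).

End Defs.

(* Main.v *)
Require Import Defs.
From HB Require Import structures.
From mathcomp Require Import all_boot all_order all_algebra.
From mathcomp Require Import reals exp sequences.
From mathcomp Require Import ring lra.
Import Order.TTheory GRing.Theory Num.Theory.
Local Open Scope ring_scope.

Section Num.
Variable R : realType.
Implicit Types x y a e d : R.

Lemma pD x r s : 0 < x -> x `^ (r + s) = x `^ r * x `^ s.
Proof. by move=> x0; rewrite powRD // (gt_eqF x0) implybT. Qed.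

Lemma pM x y r : 0 <= x -> 0 <= y -> (x * y) `^ r = x `^ r * y `^ r.
Proof. exact: powRM. Qed.

Lemma pV x r : 0 < x -> (x^-1) `^ r = (x `^ r)^-1.
Proof.
move=> x0; apply: (@mulIf _ (x `^ r)); first by rewrite gt_eqF // powR_gt0.
by rewrite -pM ?invr_ge0 ?ltW // mulVf ?gt_eqF // powR1 mulVf // gt_eqF // powR_gt0.
Qed.

Lemma pmono x y e : 0 <= x -> x <= y -> 0 <= e -> x `^ e <= y `^ e.
Proof. by move=> x0 xy e0; apply: ge0_ler_powR => //; rewrite nnegrE // (le_trans x0 xy). Qed.

Lemma panti x y e : 0 < x -> x <= y -> e <= 0 -> y `^ e <= x `^ e.
Proof.
move=> x0 xy e0; have y0 : 0 < y by exact: lt_le_trans x0 xy.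
have -> : e = - (- e) by rewrite opprK.
rewrite (powRN x) (powRN y) lef_pV2 ?posrE ?powR_gt0 //.
by apply: pmono => //; [exact: ltW | rewrite oppr_ge0].
Qed.


Lemma keyP y d : 0 <= y -> 0 < d <= 1 -> y `^ d <= 1 - d + d * y.
Proof.
move=> y0 /andP[d0 d1]; have [->|dlt1] := eqVneq d 1.
  by rewrite powRr1 // subrr add0r mul1r.
have d1' : d < 1 by rewrite lt_neqAle dlt1 d1.
have := @conjugate_powR R (y `^ d) 1 d^-1 (1 - d)^-1 (powR_ge0 _ _) ler01.
rewrite invr_gt0 d0 invr_gt0 subr_gt0 d1' !invrK => /(_ isT isT).
rewrite addrC subrK => /(_ erefl); rewrite mulr1 powR1 -powRrM mulfV ?gt_eqF //.
by rewrite powRr1 // mul1r addrC mulrC.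
Qed.

Lemma keyN y d : 0 < y -> d <= 0 -> 1 - d + d * y <= y `^ d.
Proof.
move=> y0 d0; rewrite /powR (gt_eqF y0).
apply: le_trans (expR_ge1Dx _).
have : ln y <= y - 1.
  have := @le_ln1Dx R (y - 1); rewrite (_ : 1 + (y - 1) = y); last by ring.
  by apply; lra.
move=> h; have : d * (y - 1) <= d * ln y by rewrite ler_wnM2l.
lra.
Qed.

Lemma teleP x d : 1 <= x -> 0 < d <= 1 -> d * x `^ (d - 1) <= x `^ d - (x - 1) `^ d.
Proof.
move=> x1 hd; have x0 : 0 < x by exact: lt_le_trans ltr01 x1.
have y0 : 0 <= 1 - x^-1 by rewrite subr_ge0 invf_le1.
have -> : x - 1 = x * (1 - x^-1) by rewrite mulrBr mulr1 mulfV ?gt_eqF.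
rewrite pM; [|exact: ltW|exact: y0]; rewrite pD // powR_inv1; last exact: ltW.
have := @keyP _ _ y0 hd; have := powR_gt0 d x0.
set X := x `^ d; set Y := (1 - x^-1) `^ d => X0 hY.
have : X * Y <= X * (1 - d + d * (1 - x^-1)) by rewrite ler_wpM2l // ltW.
lra.
Qed.

Lemma teleN x d : 1 < x -> d <= 0 -> - d * x `^ (d - 1) <= (x - 1) `^ d - x `^ d.
Proof.
move=> x1 hd; have x0 : 0 < x by exact: lt_trans ltr01 x1.
have y0 : 0 < 1 - x^-1 by rewrite subr_gt0 invf_lt1.
have -> : x - 1 = x * (1 - x^-1) by rewrite mulrBr mulr1 mulfV ?gt_eqF.
rewrite pM; [|exact: ltW|exact: ltW]; rewrite pD // powR_inv1; last exact: ltW.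
have := @keyN _ _ y0 hd; have := powR_gt0 d x0.
set X := x `^ d; set Y := (1 - x^-1) `^ d => X0 hY.
have : X * (1 - d + d * (1 - x^-1)) <= X * Y by rewrite ler_wpM2l // ltW.
lra.
Qed.

Lemma teleL1 x : 1 < x -> x^-1 <= ln x - ln (x - 1).
Proof.
move=> x1; have x0 : 0 < x by exact: lt_trans ltr01 x1.
have y0 : 0 < 1 - x^-1 by rewrite subr_gt0 invf_lt1.
have -> : x - 1 = x * (1 - x^-1) by rewrite mulrBr mulr1 mulfV ?gt_eqF.
rewrite lnM ?posrE //.
have : ln (1 + - x^-1) <= - x^-1.
  apply: le_ln1Dx; rewrite ltrN2 invf_lt1 //.
lra.
Qed.

Lemma teleL2 x : 0 < x -> ln (x + 1) - ln x <= x^-1.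
Proof.
move=> x0.
have -> : x + 1 = x * (1 + x^-1) by rewrite mulrDr mulr1 mulfV ?gt_eqF.
rewrite lnM ?posrE ?addr_gt0 ?invr_gt0 //.
have : ln (1 + x^-1) <= x^-1.
  apply: le_ln1Dx; have : 0 < x^-1 by rewrite invr_gt0.
  lra.
lra.
Qed.


Definition H (p : nat) a : R := \sum_(0 <= i < p) (i.+1%:R `^ (- a)).

Lemma H_ge p a : 0 <= a -> p%:R * p%:R `^ (- a) <= H p a.
Proof.
move=> a0; rewrite /H; have -> : p%:R * p%:R `^ (-a) = \sum_(0 <= i < p) p%:R `^ (-a) :> R
  by rewrite sumr_const_nat subn0 mulr_natl.
apply: ler_sum_nat => i /andP[_ ip]; apply: panti; rewrite ?ltr0Sn ?ler_nat // oppr_le0 //.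
Qed.

Lemma H_ge0 p a : 0 <= H p a.
Proof. by apply: sumr_ge0 => i _; exact: powR_ge0. Qed.

Lemma H_ge1 p a : (1 <= p)%N -> 1 <= H p a.
Proof.
move=> p1; rewrite /H big_ltn // powR1 lerDl; apply: sumr_ge0 => i _; exact: powR_ge0.
Qed.

Lemma H0 k : H k 0 = k%:R.
Proof. by rewrite /H (eq_bigr (fun=> 1)) => [|i _]; rewrite ?oppr0 ?powRr0 // sumr_const_nat subn0. Qed.

Lemma H1S k : H k.+1 1 = H k 1 + (k.+1%:R)^-1.
Proof. by rewrite /H big_nat_recr //= powR_inv1. Qed.

Lemma Hln_up k : (1 <= k)%N -> H k 1 <= 1 + ln k%:R.
Proof.
elim: k => // k IH _; have [->|k0] := posnP k.
  by rewrite H1S /H big_geq // ln1 add0r invr1 addr0.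
rewrite H1S; have := IH k0; have := @teleL1 k.+1%:R.
rewrite ltr1n ltnS k0 => /(_ isT); rewrite -natr1 addrK; lra.
Qed.

Lemma Hln_lo k : ln k.+1%:R <= H k 1.
Proof.
elim: k => [|k IH]; first by rewrite /H big_geq // ln1.
rewrite H1S; have := @teleL2 k.+1%:R (ltr0Sn _ _); rewrite -[k.+2%:R]natr1.
move: IH; set A := ln _; set B := ln _; set C := _^-1; lra.
Qed.


Lemma H_split p k a : (p <= k)%N -> H k a = H p a + \sum_(p <= i < k) (i.+1%:R `^ (- a)).
Proof. by move=> pk; rewrite /H (big_cat_nat (leq0n p) pk). Qed.

Lemma tailP a d p j : 0 <= a -> 0 < d <= 1 -> 1 - a <= d -> (1 <= p)%N ->
  d * \sum_(p <= i < p + j) (i.+1%:R `^ (- a))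
    <= p%:R `^ (1 - a - d) * ((p + j)%:R `^ d - p%:R `^ d).
Proof.
move=> a0 hd ad p1; have p0 : 0 < p%:R :> R by rewrite ltr0n.
elim: j => [|j IH]; first by rewrite addn0 big_geq // mulr0 subrr mulr0.
rewrite addnS big_nat_recr ?leq_addr //= mulrDr.
set x : R := (p + j).+1%:R.
have x1 : 1 <= x by rewrite /x ler1n.
have hx : x - 1 = (p + j)%:R by rewrite /x -natr1 addrK.
have := @teleP _ _ x1 hd; rewrite hx => ht.
have ex : x `^ (- a) = x `^ (d - 1) * x `^ (1 - a - d).
  by rewrite -pD ?(lt_le_trans ltr01 x1) //; congr (_ `^ _); ring.
rewrite ex.
have hg : x `^ (1 - a - d) <= p%:R `^ (1 - a - d).
  by apply: panti => //; [rewrite /x ler_nat; apply: leqW; exact: leq_addr | lra].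
have hpos : 0 <= d * x `^ (d - 1) by rewrite mulr_ge0 ?powR_ge0 // ltW //; case/andP: hd.
have h1 : d * (x `^ (d - 1) * x `^ (1 - a - d)) <= d * x `^ (d - 1) * p%:R `^ (1 - a - d).
  by rewrite mulrA ler_wpM2l.
have h2 : d * x `^ (d - 1) * p%:R `^ (1 - a - d) <= (x `^ d - (p + j)%:R `^ d) * p%:R `^ (1 - a - d).
  by rewrite ler_wpM2r ?powR_ge0.
move: IH h1 h2; set P := p%:R `^ _; set S := \sum_(_ <= _ < _) _.
set A := d * _; set B := (p + j)%:R `^ d; set X := x `^ d; set Q := p%:R `^ d.
move=> IH h1 h2.
have -> : P * (X - Q) = P * (B - Q) + (X - B) * P by ring.
lra.
Qed.

Lemma tailN a p j : 1 < a -> (1 <= p)%N ->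
  (a - 1) * \sum_(p <= i < p + j) (i.+1%:R `^ (- a))
    <= p%:R `^ (1 - a) - (p + j)%:R `^ (1 - a).
Proof.
move=> a1 p1; have p0 : 0 < p%:R :> R by rewrite ltr0n.
elim: j => [|j IH]; first by rewrite addn0 big_geq // mulr0 subrr.
rewrite addnS big_nat_recr ?leq_addr //= mulrDr.
set x : R := (p + j).+1%:R.
have x1 : 1 < x by rewrite /x ltr1n ltnS (leq_trans p1) ?leq_addr.
have hx : x - 1 = (p + j)%:R by rewrite /x -natr1 addrK.
have := @teleN x (1 - a) x1; rewrite hx (_ : 1 - a - 1 = - a); last by ring.
rewrite opprB => /(_ ltac:(lra)).
move: IH; set S := \sum_(_ <= _ < _) _; set B := (p + j)%:R `^ _.
set X := x `^ _; set Y := x `^ _; set Q := p%:R `^ _.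
lra.
Qed.


Lemma ratio a e : 0 <= a -> 0 <= e <= 1 -> 1 - a <= e -> (0 < e) || (1 < a) ->
  exists2 C, 0 < C & forall p k : nat, (1 <= p)%N -> (p <= k)%N ->
    H k a <= C * (k%:R / p%:R) `^ e * H p a.
Proof.
move=> a0 /andP[e0 e1] ae hor; have [epos|ele0] := ltrP 0 e.
  exists (1 + e^-1); first by rewrite addr_gt0 ?invr_gt0.
  move=> p k p1 pk; have p0 : 0 < p%:R :> R by rewrite ltr0n.
  have k0 : 0 < k%:R :> R by rewrite ltr0n (leq_trans p1).
  rewrite (@H_split p k a pk).
  have := @tailP a e p (k - p) a0 ltac:(by rewrite epos e1) ae p1.
  rewrite subnKC //.
  set T := \sum_(_ <= _ < _) _; set X := (k%:R / p%:R) `^ e.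
  have hX : 1 <= X.
    have hr : 1 <= k%:R / p%:R :> R by rewrite ler_pdivlMr // mul1r ler_nat.
    by have := @pmono 1 _ e ler01 hr e0; rewrite powR1.
  have eq1 : p%:R `^ (1 - a - e) * k%:R `^ e = p%:R * p%:R `^ (- a) * X.
    rewrite /X pM ?invr_ge0 ?ltW // pV //.
    rewrite !pD // powRr1 ?ltW // !powRN; ring.
  have hg : 0 <= p%:R `^ (1 - a - e) * p%:R `^ e by rewrite mulr_ge0 ?powR_ge0.
  have hHp := @H_ge p a a0; have hH0 := H_ge0 p a.
  move=> hT.
  have hT2 : e * T <= H p a * X.
    apply: le_trans hT _; rewrite mulrBr eq1.
    apply: le_trans (_ : p%:R * p%:R `^ (- a) * X <= _).
      by rewrite lerBlDr lerDl.
    by rewrite ler_wpM2r // (le_trans ler01 hX).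
  have hT3 : T <= e^-1 * (H p a * X).
    by rewrite -(mulKf (negbT (gt_eqF epos)) T) ler_wpM2l // invr_ge0 ltW.
  have hHX : H p a <= H p a * X by rewrite ler_peMr.
  move: hT3 hHX; set h := H p a; set E := e^-1 => hT3 hHX.
  have -> : (1 + E) * X * h = h * X + E * (h * X) by ring.
  lra.
have e00 : e = 0 by apply/eqP; rewrite eq_le e0 ele0.
move: hor; rewrite e00 ltxx /= => a1.
exists (1 + (a - 1)^-1); first by rewrite addr_gt0 ?invr_gt0 ?subr_gt0.
move=> p k p1 pk; have p0 : 0 < p%:R :> R by rewrite ltr0n.
rewrite (@H_split p k a pk).
rewrite powRr0 mulr1.
have := @tailN a p (k - p) a1 p1; rewrite subnKC //.
set T := \sum_(_ <= _ < _) _ => hT.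
have hp : p%:R `^ (1 - a) <= H p a.
  by rewrite pD // powRr1 ?(ltW p0) //; apply: H_ge; lra.
have hT2 : (a - 1) * T <= H p a.
  by apply: le_trans hT _; apply: le_trans hp; rewrite lerBlDr lerDl powR_ge0.
have hT3 : T <= (a - 1)^-1 * H p a.
  have a10 : 0 < a - 1 by rewrite subr_gt0.
  by rewrite -(mulKf (negbT (gt_eqF a10)) T) ler_wpM2l // invr_ge0 ltW.
move: hT3; set h := H p a; set E := (a - 1)^-1 => hT3.
lra.
Qed.


Lemma fin_bound (p k : nat) (E tau : R) : (1 <= p)%N -> (p <= k)%N -> E <= tau -> 1 <= tau ->
  p%:R * (k%:R / p%:R) `^ E <= k%:R `^ tau.
Proof.
move=> p1 pk Et t1; have p0 : 0 < p%:R :> R by rewrite ltr0n.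
have k1 : 1 <= k%:R :> R by rewrite ler1n (leq_trans p1).
have hr : 1 <= k%:R / p%:R :> R by rewrite ler_pdivlMr // mul1r ler_nat.
have [E1|E1] := lerP E 1.
  apply: (@le_trans _ _ (p%:R * (k%:R / p%:R))).
    by apply: ler_wpM2l; [exact: ltW | exact: ler1_powR].
  rewrite mulrC divfK ?gt_eqF //.
  by apply: le_trans (ler_powR k1 t1); rewrite powRr1 // ler0n.
rewrite pM ?ler0n ?invr_ge0 ?(ltW p0) // pV //.
apply: (@le_trans _ _ (k%:R `^ E)); last exact: ler_powR.
have hpE : p%:R <= p%:R `^ E by rewrite le1r_powR ?ler1n // ltW.
have pE0 : 0 < p%:R `^ E by rewrite powR_gt0.
have h : p%:R / p%:R `^ E <= 1 by rewrite ler_pdivrMr // mul1r.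
rewrite (_ : p%:R * (k%:R `^ E / p%:R `^ E) = k%:R `^ E * (p%:R / p%:R `^ E)); last by ring.
by apply: le_trans (ler_wpM2l (powR_ge0 _ _) h) _; rewrite mulr1.
Qed.

Lemma profile (n k : nat) a (x : 'I_n -> R) : (1 <= k)%N -> power_law_profile k a x ->
  forall p, (p <= k)%N -> struct_fun x p = H k a / H p a.
Proof.
move=> k1 [hcard hsum [c [c0 hnth]]].
set s := sorted_sq x.
have sz : size s = n by rewrite /s /sorted_sq size_sort size_map size_enum_ord.
have hpos i : (i < k)%N -> nth 0 s i != 0.
  by move=> ik; rewrite hnth // mulf_neq0 ?gt_eqF // powR_gt0 // ltr0Sn.
have kn : (k <= n)%N.
  rewrite leqNgt; apply/negP => nk.
  have : (k.-1 < k)%N by rewrite prednK.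
  by move/hpos; rewrite nth_default ?eqxx // sz -ltnS prednK.
have hsum_take p : (p <= k)%N -> \sum_(y <- take p s) y = c * H p a.
  move=> pk; rewrite (big_nth 0) size_takel; last by rewrite sz (leq_trans pk).
  rewrite /H mulr_sumr.
  by apply: eq_big_nat => i /andP[_ ip]; rewrite nth_take // hnth // (leq_trans ip pk).
have hperm : perm_eq s [seq x i ^+ 2 | i <- enum 'I_n] by rewrite /s /sorted_sq perm_sort.
have tot : \sum_(y <- s) y = 1.
  by rewrite (perm_big _ hperm) big_map big_enum /= -hsum.
set P := fun y : R => y != 0.
have countk : count P s = k.
  rewrite (permP hperm) count_map -hcard enumT cardE /enum_mem size_filter.
  by apply: eq_count => i; rewrite /P /= inE sqrf_eq0.
have counttake : count P (take k s) = k.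
  have : all P (take k s).
    apply/(all_nthP 0) => i; rewrite size_takel ?sz // => ik; rewrite nth_take //; exact: hpos.
  by rewrite all_count size_takel ?sz // => /eqP.
have hdrop : count P (drop k s) = 0%N.
  have h : (count P (take k s) + count P (drop k s))%N = k by rewrite -count_cat cat_take_drop.
  rewrite counttake in h.
  by apply/eqP; rewrite -(eqn_add2l k) addn0 h.
have sumdrop : \sum_(y <- drop k s) y = 0.
  apply: big1_seq => y /andP[_ hy].
  have : ~~ has P (drop k s) by rewrite has_count hdrop.
  by move/hasPn => /(_ y hy); rewrite /P negbK => /eqP.
have cH : c * H k a = 1.
  by rewrite -hsum_take // -tot -{2}(cat_take_drop k s) big_cat /= sumdrop addr0.
have Hk0 : H k a != 0 by rewrite gt_eqF // (lt_le_trans ltr01) // H_ge1.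
have ce : c = (H k a)^-1 by apply: (mulIf Hk0); rewrite cH mulVf.
by move=> p pk; rewrite /struct_fun -/s hsum_take // ce invfM invrK mulrC.
Qed.


Lemma bigmax_ge (F : nat -> R) m n j : (m <= j < n)%N ->
  F j <= \big[Num.max/0]_(m <= i < n) F i.
Proof.
rewrite -mem_index_iota; elim: (index_iota m n) => // y r IH.
rewrite big_cons in_cons => /orP[/eqP->|/IH h]; rewrite le_max ?lexx //.
by rewrite h orbT.
Qed.

Lemma bigmax_le (F : nat -> R) m n B : 0 <= B -> (forall j, (m <= j < n)%N -> F j <= B) ->
  \big[Num.max/0]_(m <= i < n) F i <= B.
Proof.
move=> B0 hF; have : forall j, j \in index_iota m n -> F j <= B.
  by move=> j; rewrite mem_index_iota; exact: hF.
elim: (index_iota m n) => [|y r IH] h; first by rewrite big_nil.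
rewrite big_cons ge_max h ?mem_head //=; apply: IH => j jr; apply: h; by rewrite in_cons jr orbT.
Qed.

Lemma choose_e a b : 0 <= a -> 0 <= b -> ~~ (((a == 0) && (b == 1)) || ((a == 1) && (b == 0))) ->
  exists ea eb, [/\ 0 <= ea, ea <= 1, 1 - a <= ea & (0 < ea) \/ (1 < a)] /\
    [/\ 0 <= eb, eb <= 1, 1 - b <= eb & (0 < eb) \/ (1 < b)] /\
    ea + eb <= Num.max 1 (2 - (a + b)).
Proof.
move=> a0 b0 hns.
have hm x : x <= Num.max 1 x by rewrite le_max lexx orbT.
have h1 x : 1 <= Num.max 1 x by rewrite le_max lexx.
have [a1|a1] := ltrP a 1; have [b1|b1] := ltrP b 1.
- exists (1 - a), (1 - b); split; [split; lra | split; [split; lra|]].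
  apply: le_trans (hm _); lra.
- have [az|ap] := eqVneq a 0.
  + have b1' : 1 < b.
      rewrite lt_neqAle b1 andbT; apply/negP => /eqP hb; move: hns; rewrite az -hb !eqxx //.
    exists 1, 0; split; [split; lra | split; [split; lra|]].
    by rewrite addr0 h1.
  + have apos : 0 < a by rewrite lt_neqAle eq_sym ap a0.
    exists (1 - a), a; split; [split; lra | split; [split; lra|]].
    by rewrite subrK h1.
- have [bz|bp] := eqVneq b 0.
  + have a1' : 1 < a.
      rewrite lt_neqAle a1 andbT; apply/negP => /eqP ha; move: hns; rewrite bz -ha !eqxx orbT //.
    exists 0, 1; split; [split; lra | split; [split; lra|]].
    by rewrite add0r h1.
  + have bpos : 0 < b by rewrite lt_neqAle eq_sym bp b0.
    exists b, (1 - b); split; [split; lra | split; [split; lra|]].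
    by rewrite addrC subrK h1.
- exists (2^-1), (2^-1); split; [split; lra | split; [split; lra|]].
  by apply: le_trans (h1 (2 - (a + b))); lra.
Qed.

End Num.

Theorem corollary1 (R : realType) (au av : R) (hau : 0 <= au) (hav : 0 <= av) :
  let tau := Num.max 1 (2 - (au + av)) in
  let rate (k : nat) : R :=
    if ((au == 0) && (av == 1)) || ((au == 1) && (av == 0))
    then k%:R * ln (k%:R)
    else (k%:R) `^ tau in
  exists c C : R, 0 < c /\ 0 < C /\
    exists K : nat, forall (k n : nat) (u v : 'I_n -> R),
      (K <= k)%N ->
      power_law_profile k au u -> power_law_profile k av v ->
      c * rate k <= bisep_term k u v /\ bisep_term k u v <= C * rate k.
Proof.
move=> tau rate.
have F_eq : forall (k n : nat) (u v : 'I_n -> R), (1 <= k)%N ->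
    power_law_profile k au u -> power_law_profile k av v -> forall p, (p <= k)%N ->
    p%:R * struct_fun u p * struct_fun v p
      = p%:R * (H R k au / H R p au) * (H R k av / H R p av).
  by move=> k n u v hk hu hv p pk; rewrite (@profile R _ _ _ _ hk hu _ pk) (@profile R _ _ _ _ hk hv _ pk).
have H1 x : H R 1 x = 1.
  by rewrite /H big_nat1 (@powR1 R).
unfold rate; case hflag: (((au == 0) && (av == 1)) || ((au == 1) && (av == 0))) => /=.
- have hab : forall (k p : nat), (1 <= p)%N -> (p <= k)%N ->
      p%:R * (H R k au / H R p au) * (H R k av / H R p av) = k%:R * (H R k 1 / H R p 1).
    move=> k p p1 pk; have p0 : p%:R != 0 :> R by rewrite pnatr_eq0 -lt0n.
    have Hp0 : H R p 1 != 0 by rewrite gt_eqF // (lt_le_trans ltr01) // H_ge1.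
    move: hflag => /orP[/andP[/eqP-> /eqP->]|/andP[/eqP-> /eqP->]]; rewrite !H0; field; by rewrite Hp0 p0.
  set K := maxn 1 (Num.Def.archi_bound (expR (1:R))).
  exists 1, 2; split; first exact: ltr01.
  split; first by rewrite ltr0n.
  exists K => k n u v hK hu hv.
  have k1 : (1 <= k)%N by apply: leq_trans hK; rewrite leq_maxl.
  have lnk : 1 <= ln (k%:R : R).
    have e0 : 0 < expR (1:R) by rewrite expR_gt0.
    have hb := archi_boundP (ltW e0).
    have ek : expR 1 <= k%:R :> R.
      apply: le_trans (ltW hb) _; rewrite ler_nat; apply: leq_trans hK; exact: leq_maxr.
    by rewrite -[X in X <= _](expRK 1) ler_ln // posrE (lt_le_trans e0 ek).
  have kpos : 0 < k%:R :> R by rewrite ltr0n.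
  split.
  + rewrite mul1r /bisep_term.
    apply: le_trans (@bigmax_ge R _ 1 k.+1 1 _); last by rewrite leqnn ltnS.
    have Fe := F_eq k n u v k1 hu hv; rewrite /= Fe // hab // H1 divr1; rewrite ler_wpM2l ?ler0n //.
    by apply: le_trans (Hln_lo R k); rewrite ler_ln ?posrE ?ltr0n // ler_nat leqnSn.
  + rewrite /bisep_term; apply: bigmax_le; first by rewrite mulr_ge0 // mulr_ge0 ?ler0n // (le_trans ler01 lnk).
    move=> j /andP[j1 jk]; rewrite ltnS in jk; have Fe := F_eq k n u v k1 hu hv; rewrite /= Fe // hab //.
    have hj := @H_ge1 R j 1 j1.
    have hk := @Hln_up R k k1.
    have hk0 := @H_ge0 R k 1.
    have : H R k 1 / H R j 1 <= H R k 1.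
      by rewrite ler_pdivrMr ?(lt_le_trans ltr01) // ler_peMr.
    move=> h; apply: le_trans (ler_wpM2l (ler0n _ _) h) _.
    have : k%:R * H R k 1 <= k%:R * (1 + ln k%:R) by rewrite ler_wpM2l ?ler0n.
    have : k%:R * 1 <= k%:R * ln (k%:R : R) by rewrite ler_wpM2l ?ler0n.
    set L := ln _; set Hk := H R k 1 => h1 h2.
    have -> : 2 * (k%:R * L) = k%:R * L + k%:R * L by ring.
    rewrite mulrDr in h2.
    lra.
- have [ea [eb [[ea0 ea1 ae ea'] [[eb0 eb1 be eb'] hE]]]] := @choose_e R _ _ hau hav (negbT hflag).
  have [Ca Ca0 hCa] := @ratio R au ea hau (introT andP (conj ea0 ea1)) ae (introT orP ea').
  have [Cb Cb0 hCb] := @ratio R av eb hav (introT andP (conj eb0 eb1)) be (introT orP eb').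
  have t1 : 1 <= tau by rewrite /tau le_max lexx.
  exists 1, (Ca * Cb); split; first exact: ltr01.
  split; first by rewrite mulr_gt0.
  exists 1%N => k n u v k1 hu hv.
  have kpos : 0 < k%:R :> R by rewrite ltr0n.
  have Hkpos x : 0 < H R k x by rewrite (lt_le_trans ltr01) // H_ge1.
  split.
  + rewrite mul1r /bisep_term.
    have [h|h] := lerP (2 - (au + av)) 1.
    * rewrite /tau (max_idPl h) powRr1 ?ler0n //.
      apply: le_trans (@bigmax_ge R _ 1 k.+1 k _); last by rewrite k1 ltnS leqnn.
      by have Fe := F_eq k n u v k1 hu hv; rewrite /= Fe // !divff ?gt_eqF // !mulr1.
    * rewrite /tau (max_idPr (ltW h)).
      apply: le_trans (@bigmax_ge R _ 1 k.+1 1 _); last by rewrite leqnn ltnS.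
      have Fe := F_eq k n u v k1 hu hv; rewrite /= Fe // !H1 !divr1 mul1r.
      have -> : 2 - (au + av) = (1 + - au) + (1 + - av) by ring.
      rewrite !(@pD R _ _ _ kpos) powRr1 ?ler0n //.
      apply: ler_pM; rewrite ?mulr_ge0 ?ler0n ?powR_ge0 //; exact: H_ge.
  + rewrite /bisep_term; apply: bigmax_le; first by rewrite !mulr_ge0 ?powR_ge0 ?(ltW Ca0) ?(ltW Cb0).
    move=> j /andP[j1 jk]; rewrite ltnS in jk; have Fe := F_eq k n u v k1 hu hv; rewrite /= Fe //.
    have jpos : 0 < j%:R :> R by rewrite ltr0n.
    have Hjpos x : 0 < H R j x by rewrite (lt_le_trans ltr01) // H_ge1.
    pose x : R := k%:R / j%:R.
    have xpos : 0 < x by rewrite divr_gt0.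
    have ra : H R k au / H R j au <= Ca * x `^ ea by rewrite ler_pdivrMr //; exact: hCa.
    have rb : H R k av / H R j av <= Cb * x `^ eb by rewrite ler_pdivrMr //; exact: hCb.
    apply: le_trans (_ : j%:R * (Ca * x `^ ea) * (Cb * x `^ eb) <= _).
      apply: ler_pM; [by rewrite mulr_ge0 ?ler0n ?divr_ge0 ?H_ge0 | by rewrite divr_ge0 ?H_ge0 | by rewrite ler_wpM2l ?ler0n | exact: rb].
    have -> : j%:R * (Ca * x `^ ea) * (Cb * x `^ eb) = Ca * Cb * (j%:R * x `^ (ea + eb)).
      by rewrite (@pD R _ _ _ xpos); ring.
    rewrite ler_wpM2l ?mulr_ge0 ?(ltW Ca0) ?(ltW Cb0) //.
    exact: fin_bound.
Qed.
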